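(* Consider, for $i=1,2$, $a\in[0,A]$, $t\ge 0$, the age-structured predator–prey system $$\partial_t x_1(a,t)+\partial_a x_1(a,t)=-x_1(a,t)\Big[\mu_1(a)+u(t)+\int_0^A g_1(\alpha)x_2(\alpha,t)\,d\alpha\Big],$$ $$\partial_t x_2(a,t)+\partial_a x_2(a,t)=-x_2(a,t)\Big[\mu_2(a)+u(t)+\frac{1}{\int_0^A g_2(\alpha)x_1(\alpha,t)\,d\alpha}\Big],$$ $$x_i(0,t)=\int_0^A k_i(a)x_i(a,t)\,da .$$ Let $u^*\in(0,\min\{\zeta_1,\zeta_2\})$. Then the system admits, with constant input $u\equiv u^*$, a time-independent solution $(x_1^*,x_2^* )$ with positive values, given by $$x_i^*(a)=x_i^*(0)\,\tilde x_i^*(a),\qquad \tilde x_i^*(a)=e^{-\int_0^a(\zeta_i+\mu_i(s))ds},$$ $$x_1^*(0)=\frac{1}{(\zeta_2-u^* )\int_0^A g_2(a)\tilde x_1^*(a)\,da}>0,\qquad x_2^*(0)=\frac{\zeta_1-u^*}{\int_0^A g_1(a)\tilde x_2^*(a)\,da}>0,$$ and these satisfy $u^*=\zeta_1-\lambda_2=\zeta_2-\frac1{\lambda_1}$, where $\lambda_1:=\int_0^A g_2(a)x_1^*(a)\,da>0$ and $\lambda_2:=\int_0^A g_1(a)x_2^*(a)\,da>0$. Conversely, every time-independent solution $(x_1^*,x_2^* )$ with positive values corresponding to a constant input $u^*>0$ is of this form, and necessarily $u^*\in(0,\min\{\zeta_1,\zeta_2\})$.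
   Context: $A>0$ is the maximal age. For $i=1,2$, $\mu_i,k_i,g_i:[0,A]\to[0,\infty)$ are (piecewise continuous) functions with $\int_0^A\mu_i>0$, $\int_0^A k_i>0$, $\int_0^A g_i>0$ (mortality, birth and interaction kernels). $\zeta_i\in\mathbb R$ denotes the unique real number satisfying the Lotka–Sharpe condition $\int_0^A k_i(a)e^{-\int_0^a(\mu_i(s)+\zeta_i)ds}\,da=1$. *)

(* Defs.v *)
From Stdlib Require Import Reals.
From Coquelicot Require Import Coquelicot.
Open Scope R_scope.

Definition piecewise_continuous (A : R) (f : R -> R) : Prop :=
  exists (n : nat) (p : nat -> R),
    p O = 0 /\ p n = A /\
    (forall j, (j < n)%nat -> p j < p (S j)) /\
    (forall j, (j < n)%nat ->
       (forall a, p j < a < p (S j) -> continuous f a) /\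
       (exists l : R, filterlim f (at_right (p j)) (locally l)) /\
       (exists l : R, filterlim f (at_left (p (S j))) (locally l))).

Definition admissible_kernel (A : R) (f : R -> R) : Prop :=
  piecewise_continuous A f /\ (forall a, 0 <= a <= A -> 0 <= f a) /\
  0 < RInt f 0 A.

(* Lotka--Sharpe condition defining zeta_i. *)
Definition lotka_sharpe (A : R) (mu k : R -> R) (zeta : R) : Prop :=
  RInt (fun a => k a * exp (- RInt (fun s => mu s + zeta) 0 a)) 0 A = 1.

Definition xtilde (mu : R -> R) (zeta : R) (a : R) : R :=
  exp (- RInt (fun s => zeta + mu s) 0 a).

Definition x1star0 (A : R) (mu1 g2 : R -> R) (zeta1 zeta2 ustar : R) : R :=
  / ((zeta2 - ustar) * RInt (fun a => g2 a * xtilde mu1 zeta1 a) 0 A).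

Definition x2star0 (A : R) (mu2 g1 : R -> R) (zeta1 zeta2 ustar : R) : R :=
  (zeta1 - ustar) / RInt (fun a => g1 a * xtilde mu2 zeta2 a) 0 A.

(* Time-independent solution (x1, x2) of the predator--prey system on [0,A]
   with constant input u, in integrated (mild) form along the age variable:
     x_i(a) = x_i(0) - int_0^a x_i(s) [mu_i(s) + u + c_i] ds,
   with c_1 = int g1 x2 and c_2 = 1 / int g2 x1, plus the renewal
   boundary conditions x_i(0) = int_0^A k_i x_i. *)
Definition steady_state (A : R) (mu1 mu2 k1 k2 g1 g2 : R -> R) (u : R)
    (x1 x2 : R -> R) : Prop :=
  let I1 := RInt (fun al => g1 al * x2 al) 0 A in
  let I2 := RInt (fun al => g2 al * x1 al) 0 A in
  ex_RInt (fun al => g1 al * x2 al) 0 A /\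
  ex_RInt (fun al => g2 al * x1 al) 0 A /\
  ex_RInt (fun a => k1 a * x1 a) 0 A /\
  ex_RInt (fun a => k2 a * x2 a) 0 A /\
  (forall a, 0 <= a <= A ->
     ex_RInt (fun s => x1 s * (mu1 s + u + I1)) 0 a /\
     x1 a = x1 0 - RInt (fun s => x1 s * (mu1 s + u + I1)) 0 a) /\
  (forall a, 0 <= a <= A ->
     ex_RInt (fun s => x2 s * (mu2 s + u + / I2)) 0 a /\
     x2 a = x2 0 - RInt (fun s => x2 s * (mu2 s + u + / I2)) 0 a) /\
  x1 0 = RInt (fun a => k1 a * x1 a) 0 A /\
  x2 0 = RInt (fun a => k2 a * x2 a) 0 A.

Definition positive_on (A : R) (x : R -> R) : Prop :=
  forall a, 0 <= a <= A -> 0 < x a.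

(* Main.v *)
Require Import Defs.
From Stdlib Require Import Reals Lra Lia.
From Coquelicot Require Import Coquelicot.
Open Scope R_scope.

Lemma cont_ed_intro (f : R -> R) x :
  (forall eps, 0 < eps -> exists delta, 0 < delta /\
     forall y, Rabs (y - x) < delta -> Rabs (f y - f x) < eps) ->
  continuous f x.
Proof.
  intros H. apply filterlim_locally. intros eps.
  destruct (H eps (cond_pos eps)) as [d [Hd Hy]].
  exists (mkposreal d Hd). intros y Hy'. apply Hy. exact Hy'.
Qed.

Lemma cont_ed_elim (f : R -> R) x : continuous f x ->
  forall eps, 0 < eps -> exists delta, 0 < delta /\
     forall y, Rabs (y - x) < delta -> Rabs (f y - f x) < eps.
Proof.
  intros H eps Heps. destruct (proj1 (filterlim_locally f (f x)) H (mkposreal eps Heps)) as [d Hd].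
  exists d. split. apply cond_pos. intros y Hy. apply (Hd y Hy).
Qed.

Lemma loc_int x c d : c < x < d -> locally x (fun t => c < t < d).
Proof.
  intros Hx. assert (H0 : 0 < Rmin (x - c) (d - x)) by (apply Rmin_glb_lt; lra).
  exists (mkposreal _ H0). intros t Ht. change (Rabs (t - x) < Rmin (x - c) (d - x)) in Ht.
  pose proof (Rmin_l (x - c) (d - x)). pose proof (Rmin_r (x - c) (d - x)).
  apply Rabs_def2 in Ht. lra.
Qed.

Definition clamp (c d x : R) : R := Rmax c (Rmin d x).

Lemma clamp_in c d x : c <= d -> c <= clamp c d x <= d.
Proof. intros. unfold clamp, Rmax, Rmin. repeat destruct Rle_dec; lra. Qed.

Lemma clamp_id c d x : c <= x <= d -> clamp c d x = x.
Proof. intros. unfold clamp, Rmax, Rmin. repeat destruct Rle_dec; lra. Qed.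

Lemma clamp_lip c d x y : c <= d -> Rabs (clamp c d y - clamp c d x) <= Rabs (y - x).
Proof.
  intros. unfold clamp, Rmax, Rmin. repeat destruct Rle_dec;
  unfold Rabs; repeat destruct Rcase_abs; lra.
Qed.

Definition wcont (c d : R) (h : R -> R) : Prop :=
  forall x, c <= x <= d -> forall eps, 0 < eps -> exists delta, 0 < delta /\
    forall y, c <= y <= d -> Rabs (y - x) < delta -> Rabs (h y - h x) < eps.

Lemma wcont_clamp c d h : c <= d -> wcont c d h ->
  forall x, continuous (fun y => h (clamp c d y)) x.
Proof.
  intros Hcd H x. apply cont_ed_intro. intros eps Heps.
  destruct (H (clamp c d x) (clamp_in c d x Hcd) eps Heps) as [del [Hdel Hy]].
  exists del. split; auto. intros y Hyx. apply Hy. apply clamp_in; auto.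
  eapply Rle_lt_trans. apply clamp_lip; auto. auto.
Qed.

Lemma cext_wcont c d h H : (forall x, continuous H x) ->
  (forall x, c <= x <= d -> H x = h x) -> wcont c d h.
Proof.
  intros HC He x Hx eps Heps. destruct (cont_ed_elim H x (HC x) eps Heps) as [del [Hdel Hy]].
  exists del. split; auto. intros y Hy' Hyx. rewrite <- (He y Hy'), <- (He x Hx). auto.
Qed.

Lemma wcont_ext c d h h' : (forall x, c <= x <= d -> h x = h' x) -> wcont c d h -> wcont c d h'.
Proof.
  intros He H x Hx eps Heps. destruct (H x Hx eps Heps) as [del [Hdel Hy]].
  exists del. split; auto. intros y Hy' Hyx. rewrite <- (He y Hy'), <- (He x Hx). auto.
Qed.

Lemma wcont_sub c d c' d' h : c <= c' -> d' <= d -> wcont c d h -> wcont c' d' h.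
Proof.
  intros H1 H2 H x Hx eps Heps. destruct (H x ltac:(lra) eps Heps) as [del [Hdel Hy]].
  exists del. split; auto. intros y Hy' Hyx. apply Hy; auto; lra.
Qed.

Lemma wcont_cont_int c d h x : wcont c d h -> c < x < d -> continuous h x.
Proof.
  intros H Hx. apply cont_ed_intro. intros eps Heps.
  destruct (H x ltac:(lra) eps Heps) as [del [Hdel Hy]].
  exists (Rmin del (Rmin (x - c) (d - x))). split.
  repeat apply Rmin_glb_lt; lra.
  intros y Hyx. pose proof (Rmin_l del (Rmin (x - c) (d - x))).
  pose proof (Rmin_r del (Rmin (x - c) (d - x))).
  pose proof (Rmin_l (x - c) (d - x)). pose proof (Rmin_r (x - c) (d - x)).
  apply Rabs_def2 in Hyx as Hyx'. apply Hy. lra. apply Rabs_def1; lra.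
Qed.


Lemma cont_exp x : continuous exp x.
Proof. apply (ex_derive_continuous (K:=R_AbsRing) (V:=R_NormedModule)). exists (exp x). apply is_derive_exp. Qed.

Lemma wcont_plus c d h1 h2 : c <= d -> wcont c d h1 -> wcont c d h2 -> wcont c d (fun y => h1 y + h2 y).
Proof.
  intros Hcd H1 H2. apply cext_wcont with (fun y => h1 (clamp c d y) + h2 (clamp c d y)).
  intros x. apply (continuous_plus (fun y => h1 (clamp c d y)) (fun y => h2 (clamp c d y)));
  apply wcont_clamp; auto.
  intros x Hx. rewrite clamp_id; auto.
Qed.

Lemma wcont_mult c d h1 h2 : c <= d -> wcont c d h1 -> wcont c d h2 -> wcont c d (fun y => h1 y * h2 y).
Proof.
  intros Hcd H1 H2. apply cext_wcont with (fun y => h1 (clamp c d y) * h2 (clamp c d y)).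
  intros x. apply (continuous_mult (fun y => h1 (clamp c d y)) (fun y => h2 (clamp c d y)));
  apply wcont_clamp; auto.
  intros x Hx. rewrite clamp_id; auto.
Qed.

Lemma wcont_comp c d g h : c <= d -> (forall x, continuous g x) -> wcont c d h -> wcont c d (fun y => g (h y)).
Proof.
  intros Hcd Hg H. apply cext_wcont with (fun y => g (h (clamp c d y))).
  intros x. apply (continuous_comp (fun y => h (clamp c d y)) g). apply wcont_clamp; auto. apply Hg.
  intros x Hx. rewrite clamp_id; auto.
Qed.

Lemma wcont_const c d k : wcont c d (fun _ => k).
Proof.
  intros x Hx eps Heps. exists 1. split. lra. intros. rewrite Rminus_eq_0, Rabs_R0. auto.
Qed.

Lemma wcont_id c d : wcont c d (fun y => y).
Proof.
  intros x Hx eps Heps. exists eps. split. lra. intros. auto.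
Qed.

Lemma cont_mult_l k x : continuous (fun y => k * y) x.
Proof. apply (continuous_mult (fun _ => k) (fun y => y)). apply continuous_const. apply continuous_id. Qed.

Lemma cont_opp x : continuous (fun y => - y) x.
Proof. apply cont_ed_intro. intros eps He. exists eps. split; auto. intros y Hy.
  replace (- y - - x) with (-(y - x)) by ring. rewrite Rabs_Ropp. auto. Qed.

Lemma ex_RInt_sub (f : R -> R) c d x y : c <= d -> ex_RInt f c d ->
  c <= x <= d -> c <= y <= d -> ex_RInt f x y.
Proof.
  intros Hcd Hf Hx Hy.
  assert (G : forall u v, c <= u <= v -> v <= d -> ex_RInt f u v).
  { intros u v Hu Hv. apply (ex_RInt_Chasles_2 f c u v). lra.
    apply (ex_RInt_Chasles_1 f c v d). lra. auto. }
  destruct (Rle_dec x y). apply G; lra. apply ex_RInt_swap. apply G; lra.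
Qed.

Lemma RInt_diff (f : R -> R) c d x y : c <= d -> ex_RInt f c d ->
  c <= x <= d -> c <= y <= d -> RInt f c y - RInt f c x = RInt f x y.
Proof.
  intros. rewrite <- (RInt_Chasles f c x y).
  change (RInt f c x + RInt f x y - RInt f c x = RInt f x y). ring.
  apply (ex_RInt_sub f c d); auto; lra.
  apply (ex_RInt_sub f c d); auto; lra.
Qed.

Lemma wcont_RInt (f : R -> R) c d : c <= d -> ex_RInt f c d -> wcont c d (fun x => RInt f c x).
Proof.
  intros Hcd Hf. destruct (ex_RInt_ub f c d Hf) as [M HM].
  intros x Hx eps Heps. exists (eps / (Rabs M + 1)).
  assert (0 < Rabs M + 1) by (pose proof (Rabs_pos M); lra).
  split. apply Rdiv_lt_0_compat; lra.
  intros y Hy Hyx. rewrite (RInt_diff f c d x y); auto.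
  assert (B : Rabs (RInt f x y) <= Rabs (y - x) * M).
  { apply (norm_RInt_le_const_abs (V:=R_NormedModule) f x y (RInt f x y) M).
    intros t Ht. apply HM. rewrite Rmin_left, Rmax_right by lra.
    split. apply Rle_trans with (Rmin x y). apply Rmin_glb; lra. apply Ht.
    apply Rle_trans with (Rmax x y). apply Ht. apply Rmax_lub; lra.
    apply (RInt_correct (V:=R_CompleteNormedModule)). apply (ex_RInt_sub f c d); auto. }
  eapply Rle_lt_trans. apply B.
  apply Rle_lt_trans with (Rabs (y - x) * (Rabs M + 1)).
  apply Rmult_le_compat_l. apply Rabs_pos. pose proof (Rle_abs M); lra.
  apply Rlt_le_trans with (eps / (Rabs M + 1) * (Rabs M + 1)).
  apply Rmult_lt_compat_r; lra. right. field. lra.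
Qed.

Lemma const_interval c d H : c < d -> wcont c d H ->
  (forall x, c < x < d -> is_derive H x 0) -> H d = H c.
Proof.
  intros Hcd HW HD.
  set (K := fun y => H (clamp c d y)).
  assert (KC : forall x, continuous K x) by (apply wcont_clamp; lra || auto).
  assert (KD : forall x, c < x < d -> is_derive K x 0).
  { intros x Hx. apply is_derive_ext_loc with H. 2: apply HD; auto.
    eapply filter_imp. 2: apply (loc_int x c d Hx).
    intros t Ht. unfold K. rewrite clamp_id; auto; lra. }
  destruct (MVT_gen K c d (fun _ => 0)) as [z [Hz E]].
  rewrite Rmin_left, Rmax_right by lra. apply KD.
  rewrite Rmin_left, Rmax_right by lra. intros x Hx. apply continuity_pt_filterlim. apply KC.
  unfold K in E. rewrite !clamp_id in E by lra. lra.
Qed.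

Definition part (A : R) (n : nat) (p : nat -> R) : Prop :=
  p O = 0 /\ p n = A /\ (forall j, (j < n)%nat -> p j < p (S j)).

Lemma part_mono A n p : part A n p -> forall i j, (i <= j <= n)%nat -> p i <= p j.
Proof.
  intros [H0 [Hn Hi]] i j. induction j; intros Hij.
  - assert (i = 0%nat) by lia. subst. lra.
  - destruct (Nat.eq_dec i (S j)). subst; lra.
    apply Rle_trans with (p j). apply IHj; lia. left. apply Hi. lia.
Qed.

Lemma part_bounds A n p : part A n p -> forall j, (j <= n)%nat -> 0 <= p j <= A.
Proof.
  intros Hp j Hj. pose proof (part_mono A n p Hp). destruct Hp as [H0 [Hn _]].
  split. rewrite <- H0. apply H; lia. rewrite <- Hn. apply H; lia.
Qed.

Lemma const_pieces A n p H : part A n p -> wcont 0 A H ->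
  (forall j, (j < n)%nat -> forall x, p j < x < p (S j) -> is_derive H x 0) ->
  forall a, 0 <= a <= A -> H a = H 0.
Proof.
  intros Hp HW HD.
  assert (G : forall j, (j <= n)%nat -> forall a, 0 <= a <= p j -> H a = H 0).
  { induction j; intros Hj a Ha.
    - destruct Hp as [H0 _]. rewrite H0 in Ha. replace a with 0 by lra. auto.
    - pose proof (part_bounds A n p Hp j ltac:(lia)) as Bj.
      pose proof (part_bounds A n p Hp (S j) Hj) as BSj.
      destruct (Rle_dec a (p j)). apply IHj; [lia | lra].
      assert (Hjn : (j <= n)%nat) by lia. rewrite <- (IHj Hjn (p j)) by lra.
      apply const_interval. lra. apply (wcont_sub 0 A); auto; lra.
      intros x Hx. apply (HD j). lia. lra. }
  intros a Ha. apply (G n). lia. destruct Hp as [_ [Hn _]]. lra.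
Qed.

Lemma at_right_ed (f : R -> R) a l : filterlim f (at_right a) (locally l) ->
  forall eps, 0 < eps -> exists del, 0 < del /\ forall y, Rabs (y - a) < del -> a < y -> Rabs (f y - l) < eps.
Proof.
  intros H eps Heps. destruct (proj1 (filterlim_locally f l) H (mkposreal eps Heps)) as [del Hd].
  exists del. split. apply cond_pos. intros y Hy Hay. apply (Hd y Hy Hay).
Qed.

Lemma at_left_ed (f : R -> R) a l : filterlim f (at_left a) (locally l) ->
  forall eps, 0 < eps -> exists del, 0 < del /\ forall y, Rabs (y - a) < del -> y < a -> Rabs (f y - l) < eps.
Proof.
  intros H eps Heps. destruct (proj1 (filterlim_locally f l) H (mkposreal eps Heps)) as [del Hd].
  exists del. split. apply cond_pos. intros y Hy Hay. apply (Hd y Hy Hay).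
Qed.

Lemma piece_ext (f : R -> R) a b l1 l2 : a < b ->
  (forall x, a < x < b -> continuous f x) ->
  filterlim f (at_right a) (locally l1) -> filterlim f (at_left b) (locally l2) ->
  exists g, (forall x, continuous g x) /\ forall x, a < x < b -> f x = g x.
Proof.
  intros Hab Hc H1 H2.
  set (g := fun x => if Rle_dec x a then l1 else if Rle_dec b x then l2 else f x).
  assert (Ga : forall x, x <= a -> g x = l1).
  { intros x Hx. unfold g. destruct Rle_dec; [auto | lra]. }
  assert (Gb : forall x, b <= x -> g x = l2).
  { intros x Hx. unfold g. destruct Rle_dec; [lra|]. destruct Rle_dec; [auto | lra]. }
  assert (Gm : forall x, a < x < b -> g x = f x).
  { intros x Hx. unfold g. destruct Rle_dec; [lra|]. destruct Rle_dec; [lra | auto]. }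
  exists g. split; [| intros; symmetry; auto].
  intros x. apply cont_ed_intro. intros eps Heps.
  destruct (Rtotal_order x a) as [Hx | [Hx | Hx]].
  - exists (a - x). split. lra. intros y Hy. apply Rabs_def2 in Hy.
    rewrite !Ga by lra. rewrite Rminus_eq_0, Rabs_R0. auto.
  - subst x. destruct (at_right_ed f a l1 H1 eps Heps) as [del [Hdel Hd]].
    exists (Rmin del (b - a)). split. apply Rmin_glb_lt; lra.
    intros y Hy. pose proof (Rmin_l del (b - a)). pose proof (Rmin_r del (b - a)).
    rewrite (Ga a) by lra. destruct (Rle_dec y a).
    rewrite Ga by lra. rewrite Rminus_eq_0, Rabs_R0. auto.
    apply Rabs_def2 in Hy as Hy'. rewrite Gm by lra. apply Hd; lra.
  - destruct (Rtotal_order x b) as [Hxb | [Hxb | Hxb]].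
    + destruct (cont_ed_elim f x (Hc x (conj Hx Hxb)) eps Heps) as [del [Hdel Hd]].
      exists (Rmin del (Rmin (x - a) (b - x))). split. repeat apply Rmin_glb_lt; lra.
      intros y Hy. pose proof (Rmin_l del (Rmin (x - a) (b - x))).
      pose proof (Rmin_r del (Rmin (x - a) (b - x))).
      pose proof (Rmin_l (x - a) (b - x)). pose proof (Rmin_r (x - a) (b - x)).
      apply Rabs_def2 in Hy as Hy'. rewrite !Gm by lra. apply Hd. lra.
    + subst x. destruct (at_left_ed f b l2 H2 eps Heps) as [del [Hdel Hd]].
      exists (Rmin del (b - a)). split. apply Rmin_glb_lt; lra.
      intros y Hy. pose proof (Rmin_l del (b - a)). pose proof (Rmin_r del (b - a)).
      rewrite (Gb b) by lra. destruct (Rle_dec b y).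
      rewrite Gb by lra. rewrite Rminus_eq_0, Rabs_R0. auto.
      apply Rabs_def2 in Hy as Hy'. rewrite Gm by lra. apply Hd; lra.
    + exists (x - b). split. lra. intros y Hy. apply Rabs_def2 in Hy.
      rewrite !Gb by lra. rewrite Rminus_eq_0, Rabs_R0. auto.
Qed.

Definition pcg (A : R) (n : nat) (p : nat -> R) (f : R -> R) : Prop :=
  part A n p /\ forall j, (j < n)%nat -> exists g, (forall x, continuous g x) /\
    forall x, p j < x < p (S j) -> f x = g x.

Definition cont_pieces (n : nat) (p : nat -> R) (f : R -> R) : Prop :=
  forall j, (j < n)%nat -> forall x, p j < x < p (S j) -> continuous f x.

Lemma pc_pcg A f : piecewise_continuous A f -> exists n p, pcg A n p f /\ cont_pieces n p f.
Proof.
  intros [n [p [H0 [Hn [Hi Hj]]]]]. exists n, p. split. split. split; auto.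
  - intros j Hjn. destruct (Hj j Hjn) as [Hc [[l1 L1] [l2 L2]]].
    apply (piece_ext f (p j) (p (S j)) l1 l2); auto.
  - intros j Hjn. apply (Hj j Hjn).
Qed.

Lemma pcg_int A n p f h : pcg A n p f -> wcont 0 A h ->
  forall c d, 0 <= c <= d -> d <= A -> ex_RInt (fun x => f x * h x) c d.
Proof.
  intros [Hp Hg] Hh.
  pose proof (part_bounds A n p Hp) as PB.
  assert (HA : 0 <= A) by (destruct Hp as [_ [Hn _]]; rewrite <- Hn; apply PB; lia).
  assert (G : forall j, (j <= n)%nat -> ex_RInt (fun x => f x * h x) 0 (p j)).
  { induction j; intros Hj.
    - destruct Hp as [H0 _]. rewrite H0. apply ex_RInt_point.
    - apply ex_RInt_Chasles with (p j). apply IHj; lia.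
      destruct (Hg j ltac:(lia)) as [g [Gc Ge]].
      pose proof (PB j ltac:(lia)). pose proof (PB (S j) Hj).
      destruct Hp as [_ [_ Hi]]. pose proof (Hi j ltac:(lia)).
      apply ex_RInt_ext with (fun x => g x * h (clamp 0 A x)).
      intros x Hx. rewrite Rmin_left, Rmax_right in Hx by lra.
      rewrite Ge by lra. rewrite clamp_id by lra. auto.
      apply (ex_RInt_continuous (V:=R_CompleteNormedModule)). intros z _.
      apply (continuous_mult g (fun x => h (clamp 0 A x))). apply Gc. apply wcont_clamp; auto. }
  intros c d Hc Hd. apply (ex_RInt_sub _ 0 A); auto; try lra.
  destruct Hp as [_ [Hn _]]. rewrite <- Hn. apply G. lia.
Qed.

Lemma pcg_int1 A n p f : pcg A n p f -> forall c d, 0 <= c <= d -> d <= A -> ex_RInt f c d.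
Proof.
  intros H c d Hc Hd. apply ex_RInt_ext with (fun x => f x * 1).
  intros x _; apply Rmult_1_r. apply (pcg_int A n p f (fun _ => 1)); auto. apply wcont_const.
Qed.

Lemma pcg_cplus A n p f k : pcg A n p f -> pcg A n p (fun s => k + f s).
Proof.
  intros [Hp Hg]. split; auto. intros j Hj. destruct (Hg j Hj) as [g [Gc Ge]].
  exists (fun s => k + g s). split. intros x.
  apply (continuous_plus (fun _ => k) g). apply continuous_const. apply Gc.
  intros x Hx. rewrite Ge; auto.
Qed.

Lemma cp_plus n p f k : cont_pieces n p f -> cont_pieces n p (fun s => f s + k).
Proof.
  intros H j Hj x Hx. apply (continuous_plus f (fun _ => k)). apply (H j Hj x Hx). apply continuous_const.
Qed.

Lemma cp_cplus n p f k : cont_pieces n p f -> cont_pieces n p (fun s => k + f s).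
Proof.
  intros H j Hj x Hx. apply (continuous_plus (fun _ => k) f). apply continuous_const. apply (H j Hj x Hx).
Qed.

Lemma is_derive_val (f : R -> R) x l l' : is_derive f x l -> l = l' -> is_derive f x l'.
Proof. intros H E; subst; auto. Qed.

Lemma RInt_0 (f : R -> R) a : RInt f a a = 0.
Proof. apply (RInt_point (V:=R_CompleteNormedModule)). Qed.

Lemma piece_interior A n p j x : part A n p -> (j < n)%nat -> p j < x < p (S j) -> 0 < x < A.
Proof.
  intros Hp Hj Hx. pose proof (part_bounds A n p Hp j ltac:(lia)).
  pose proof (part_bounds A n p Hp (S j) ltac:(lia)). lra.
Qed.

Lemma derive_RInt0 (f : R -> R) A x : 0 < x < A -> (forall b, 0 < b < A -> ex_RInt f 0 b) ->
  continuous f x -> is_derive (fun y => RInt f 0 y) x (f x).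
Proof.
  intros Hx Hi Hc. apply (is_derive_RInt (V:=R_CompleteNormedModule) f (fun y => RInt f 0 y) 0 x); auto.
  eapply filter_imp. 2: apply (loc_int x 0 A Hx).
  intros b Hb. apply (RInt_correct (V:=R_CompleteNormedModule)). apply Hi; auto.
Qed.

Lemma is_derive_expo (F : R -> R) x l : is_derive F x l ->
  is_derive (fun y => exp (- F y)) x (- l * exp (- F x)).
Proof.
  intros H. apply (is_derive_comp exp (fun y => - F y)). apply is_derive_exp.
  apply (is_derive_opp F x l H).
Qed.

Lemma is_derive_exp_pos (F : R -> R) x l : is_derive F x l ->
  is_derive (fun y => exp (F y)) x (l * exp (F x)).
Proof.
  intros H. apply (is_derive_comp exp F). apply is_derive_exp. auto.
Qed.

Lemma lin_exist A n p q : 0 < A -> pcg A n p q -> cont_pieces n p q ->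
  forall a, 0 <= a <= A ->
   ex_RInt (fun s => exp (- RInt q 0 s) * q s) 0 a /\
   exp (- RInt q 0 a) = 1 - RInt (fun s => exp (- RInt q 0 s) * q s) 0 a.
Proof.
  intros HA Hq Hc.
  assert (Iq : forall c d, 0 <= c <= d -> d <= A -> ex_RInt q c d) by (apply pcg_int1 with n p; auto).
  set (X := fun s => exp (- RInt q 0 s)).
  assert (WX : wcont 0 A X).
  { unfold X. apply (wcont_comp 0 A exp (fun s => - RInt q 0 s)). lra. apply cont_exp.
    apply (wcont_comp 0 A (fun y => - y) (fun s => RInt q 0 s)). lra. apply cont_opp.
    apply wcont_RInt. lra. apply Iq; lra. }
  assert (IXq : forall c d, 0 <= c <= d -> d <= A -> ex_RInt (fun s => X s * q s) c d).
  { intros c d Hc1 Hd. apply ex_RInt_ext with (fun s => q s * X s). intros; apply Rmult_comm.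
    apply (pcg_int A n p q X); auto. }
  set (H := fun a => X a + RInt (fun s => X s * q s) 0 a).
  assert (WH : wcont 0 A H).
  { apply wcont_plus. lra. auto. apply wcont_RInt. lra. apply IXq; lra. }
  destruct Hq as [Hp _].
  assert (DH : forall j, (j < n)%nat -> forall x, p j < x < p (S j) -> is_derive H x 0).
  { intros j Hj x Hx. pose proof (piece_interior A n p j x Hp Hj Hx) as Bx.
    assert (qc : continuous q x) by (apply (Hc j Hj x Hx)).
    assert (DF : is_derive (fun y => RInt q 0 y) x (q x)).
    { apply derive_RInt0 with A; auto. intros; apply Iq; lra. }
    assert (DX : is_derive X x (- q x * X x)) by (apply is_derive_expo; auto).
    assert (DI : is_derive (fun y => RInt (fun s => X s * q s) 0 y) x (X x * q x)).
    { apply (derive_RInt0 (fun s => X s * q s) A x); auto. intros; apply IXq; lra.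
      apply (continuous_mult X q). apply (wcont_cont_int 0 A); auto. auto. }
    apply is_derive_val with (plus (- q x * X x) (X x * q x)).
    apply (is_derive_plus X (fun y => RInt (fun s => X s * q s) 0 y)); auto.
    change (- q x * X x + X x * q x = 0). ring. }
  intros a Ha. split. apply IXq; lra.
  pose proof (const_pieces A n p H Hp WH DH a Ha) as E.
  unfold H, X in E. rewrite !RInt_0 in E.
  rewrite Ropp_0, exp_0 in E. lra.
Qed.

Lemma lin_uniq A n p q x : 0 < A -> part A n p ->
  (forall c d, 0 <= c <= d -> d <= A -> ex_RInt q c d) -> cont_pieces n p q ->
  (forall a, 0 <= a <= A -> ex_RInt (fun s => x s * q s) 0 a /\
      x a = x 0 - RInt (fun s => x s * q s) 0 a) ->
  forall a, 0 <= a <= A -> x a = x 0 * exp (- RInt q 0 a).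
Proof.
  intros HA Hp Iq Hc Hx.
  set (E := fun s => exp (RInt q 0 s)).
  assert (WE : wcont 0 A E).
  { unfold E. apply (wcont_comp 0 A exp (fun s => RInt q 0 s)). lra. apply cont_exp.
    apply wcont_RInt. lra. apply Iq; lra. }
  assert (Ix : ex_RInt (fun s => x s * q s) 0 A) by (apply Hx; lra).
  assert (Ixs : forall c d, 0 <= c <= A -> 0 <= d <= A -> ex_RInt (fun s => x s * q s) c d).
  { intros. apply (ex_RInt_sub _ 0 A); auto; lra. }
  set (J := fun a => RInt (fun s => x s * q s) 0 a).
  assert (WJ : wcont 0 A J) by (apply wcont_RInt; auto; lra).
  assert (Wx : wcont 0 A x).
  { apply wcont_ext with (fun a => x 0 + - J a).
    intros a Ha. unfold J. rewrite (proj2 (Hx a Ha)). ring.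
    apply wcont_plus. lra. apply wcont_const. apply (wcont_comp 0 A (fun y => - y) J). lra.
    apply cont_opp. auto. }
  set (Y := fun a => x a * E a).
  assert (WY : wcont 0 A Y) by (apply wcont_mult; auto; lra).
  assert (DY : forall j, (j < n)%nat -> forall t, p j < t < p (S j) -> is_derive Y t 0).
  { intros j Hj t Ht. pose proof (piece_interior A n p j t Hp Hj Ht) as Bt.
    assert (qc : continuous q t) by (apply (Hc j Hj t Ht)).
    assert (DJ : is_derive J t (x t * q t)).
    { apply (derive_RInt0 (fun s => x s * q s) A t); auto. intros; apply Ixs; lra.
      apply (continuous_mult x q). apply (wcont_cont_int 0 A); auto. auto. }
    assert (Dx : is_derive x t (0 - x t * q t)).
    { apply is_derive_ext_loc with (fun y => x 0 - J y).
      eapply filter_imp. 2: apply (loc_int t 0 A Bt).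
      intros y Hy. symmetry. apply (Hx y). lra.
      apply (is_derive_minus (fun _ => x 0) J t 0 (x t * q t)).
      exact (is_derive_const (K:=R_AbsRing) (V:=R_NormedModule) (x 0) t). auto. }
    assert (DF : is_derive (fun y => RInt q 0 y) t (q t)).
    { apply derive_RInt0 with A; auto. intros; apply Iq; lra. }
    assert (DE : is_derive E t (q t * E t)) by (apply is_derive_exp_pos; auto).
    apply is_derive_val with (plus (mult (0 - x t * q t) (E t)) (mult (x t) (q t * E t))).
    apply (is_derive_mult x E); auto. intros; apply Rmult_comm.
    change ((0 - x t * q t) * E t + x t * (q t * E t) = 0). ring. }
  intros a Ha. pose proof (const_pieces A n p Y Hp WY DY a Ha) as EY.
  unfold Y, E in EY. rewrite RInt_0, exp_0, Rmult_1_r in EY.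
  rewrite exp_Ropp. rewrite <- EY. field. apply Rgt_not_eq, exp_pos.
Qed.

Definition eX (mu : R -> R) (c a : R) : R := exp (- (RInt mu 0 a + c * a)).

Lemma RInt_shift (mu f : R -> R) c a : ex_RInt mu 0 a -> (forall s, f s = mu s + c) ->
  RInt f 0 a = RInt mu 0 a + c * a.
Proof.
  intros Hi Hf. rewrite (RInt_ext f (fun s => plus (mu s) c)) by (intros; apply Hf).
  rewrite (RInt_plus (V:=R_CompleteNormedModule) mu (fun _ => c)); auto.
  rewrite RInt_const. change (RInt mu 0 a + (a - 0) * c = RInt mu 0 a + c * a). ring.
  apply ex_RInt_const.
Qed.

Lemma exp_le x y : x <= y -> exp x <= exp y.
Proof. intros [H|H]. left; apply exp_increasing; auto. subst; lra. Qed.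

Lemma eX_wcont mu c A : 0 <= A -> ex_RInt mu 0 A -> wcont 0 A (eX mu c).
Proof.
  intros HA Hi. unfold eX.
  apply (wcont_comp 0 A exp (fun a => - (RInt mu 0 a + c * a))); auto. apply cont_exp.
  apply (wcont_comp 0 A (fun y => - y)); auto. apply cont_opp.
  apply wcont_plus; auto. apply wcont_RInt; auto.
  apply wcont_mult; auto. apply wcont_const. apply wcont_id.
Qed.

Lemma RInt_mono_up (mu : R -> R) A a : 0 <= a <= A -> ex_RInt mu 0 A ->
  (forall s, 0 <= s <= A -> 0 <= mu s) -> RInt mu 0 a <= RInt mu 0 A.
Proof.
  intros Ha Hi Hp. pose proof (RInt_diff mu 0 A a A ltac:(lra) Hi ltac:(lra) ltac:(lra)).
  assert (0 <= RInt mu a A).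
  { apply RInt_ge_0. lra. apply (ex_RInt_sub mu 0 A); auto; lra. intros; apply Hp; lra. }
  lra.
Qed.

Lemma RInt_ge0' (mu : R -> R) A a : 0 <= a <= A -> ex_RInt mu 0 A ->
  (forall s, 0 <= s <= A -> 0 <= mu s) -> 0 <= RInt mu 0 a.
Proof.
  intros Ha Hi Hp. apply RInt_ge_0. lra. apply (ex_RInt_sub mu 0 A); auto; lra. intros; apply Hp; lra.
Qed.

Lemma eX_lb mu c A a : 0 <= a <= A -> ex_RInt mu 0 A ->
  (forall s, 0 <= s <= A -> 0 <= mu s) ->
  exp (- (RInt mu 0 A + Rabs c * A)) <= eX mu c a.
Proof.
  intros Ha Hi Hp. unfold eX. apply exp_le.
  pose proof (RInt_mono_up mu A a Ha Hi Hp).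
  assert (c * a <= Rabs c * A).
  { apply Rle_trans with (Rabs c * a). rewrite <- (Rabs_pos_eq a) at 2 by lra.
    rewrite <- Rabs_mult. apply Rle_abs. apply Rmult_le_compat_l. apply Rabs_pos. lra. }
  lra.
Qed.

Lemma RInt_lb_mult (g h : R -> R) c d m : c <= d -> ex_RInt g c d ->
  ex_RInt (fun x => g x * h x) c d ->
  (forall x, c < x < d -> 0 <= g x) -> (forall x, c < x < d -> m <= h x) ->
  m * RInt g c d <= RInt (fun x => g x * h x) c d.
Proof.
  intros Hcd Ig Igh Hg Hh.
  change (m * RInt g c d) with (scal m (RInt g c d)).
  rewrite <- (RInt_scal (V:=R_CompleteNormedModule) g c d m Ig).
  apply RInt_le; auto. apply (ex_RInt_scal (V:=R_NormedModule)); auto.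
  intros x Hx. change (m * g x <= g x * h x). rewrite Rmult_comm.
  apply Rmult_le_compat_l. auto. auto.
Qed.

Lemma ls_strict A n p k mu z z' : 0 < A -> pcg A n p k ->
  (forall s, 0 <= s <= A -> 0 <= k s) -> 0 < RInt k 0 A ->
  ex_RInt mu 0 A -> (forall s, 0 <= s <= A -> 0 <= mu s) -> z < z' ->
  RInt (fun a => k a * eX mu z' a) 0 A < RInt (fun a => k a * eX mu z a) 0 A.
Proof.
  intros HA Hk Hk0 HK Imu Hmu Hz.
  set (K := RInt k 0 A).
  assert (Ik : forall c d, 0 <= c <= d -> d <= A -> ex_RInt k c d) by (apply pcg_int1 with n p; auto).
  assert (WK : wcont 0 A (fun x => RInt k 0 x)) by (apply wcont_RInt; [lra | apply Ik; lra]).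
  destruct (WK 0 ltac:(lra) (K / 2) ltac:(unfold K; lra)) as [d0 [Hd0 Hd]].
  set (del := Rmin (d0 / 2) (A / 2)).
  assert (Hdel : 0 < del <= A / 2 /\ del < d0).
  { unfold del. pose proof (Rmin_l (d0/2) (A/2)). pose proof (Rmin_r (d0/2) (A/2)).
    split. split. apply Rmin_glb_lt; lra. lra. lra. }
  destruct Hdel as [[Hdel1 Hdel2] Hdel3].
  assert (Kd : RInt k 0 del < K / 2).
  { pose proof (Hd del ltac:(lra) ltac:(rewrite Rminus_0_r, Rabs_pos_eq; lra)) as Hx.
    rewrite RInt_0, Rminus_0_r in Hx. pose proof (Rle_abs (RInt k 0 del)). lra. }
  assert (KdA : K / 2 < RInt k del A).
  { rewrite <- (RInt_diff k 0 A del A); try lra. fold K. lra. apply Ik; lra. }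
  set (w := fun a => eX mu z a - eX mu z' a).
  assert (Ikw : forall c d, 0 <= c <= d -> d <= A -> ex_RInt (fun a => k a * w a) c d).
  { intros c d Hc Hd'. apply (pcg_int A n p k w Hk); auto. unfold w.
    apply (wcont_plus 0 A (eX mu z) (fun a => - eX mu z' a)). lra. apply eX_wcont; auto; lra.
    apply (wcont_comp 0 A (fun y => - y)). lra. apply cont_opp. apply eX_wcont; auto; lra. }
  assert (Ie : forall c, ex_RInt (fun a => k a * eX mu c a) 0 A).
  { intros c. apply (pcg_int A n p k); auto. apply eX_wcont; auto; lra. lra. lra. }
  assert (Dif : RInt (fun a => k a * eX mu z a) 0 A - RInt (fun a => k a * eX mu z' a) 0 A
                = RInt (fun a => k a * w a) 0 A).
  { change (minus (RInt (fun a => k a * eX mu z a) 0 A) (RInt (fun a => k a * eX mu z' a) 0 A)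
                = RInt (fun a => k a * w a) 0 A).
    rewrite <- (RInt_minus (V:=R_CompleteNormedModule)); auto.
    apply RInt_ext. intros x _. unfold w. change (k x * eX mu z x - k x * eX mu z' x = k x * (eX mu z x - eX mu z' x)). ring. }
  assert (Wsplit : forall a, 0 <= a <= A ->
     eX mu z' a = eX mu z a * exp (- ((z' - z) * a))).
  { intros a Ha. unfold eX. rewrite <- exp_plus. f_equal. ring. }
  assert (w0 : forall a, 0 <= a <= A -> 0 <= w a).
  { intros a Ha. unfold w. rewrite Wsplit by auto.
    assert (exp (- ((z' - z) * a)) <= 1).
    { rewrite <- exp_0. apply exp_le. assert (0 <= (z' - z) * a) by (apply Rmult_le_pos; lra). lra. }
    assert (0 < eX mu z a) by apply exp_pos. nra. }
  set (L := exp (- (RInt mu 0 A + Rabs z * A))).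
  set (r := 1 - exp (- ((z' - z) * del))).
  assert (Lp : 0 < L) by apply exp_pos.
  assert (rp : 0 < r).
  { unfold r. assert (exp (- ((z' - z) * del)) < 1).
    { rewrite <- exp_0. apply exp_increasing. assert (0 < (z' - z) * del) by (apply Rmult_lt_0_compat; lra). lra. }
    lra. }
  assert (wlb : forall a, del <= a <= A -> L * r <= w a).
  { intros a Ha. unfold w. rewrite Wsplit by lra.
    assert (E1 : L <= eX mu z a).
    { unfold L. apply eX_lb; auto. lra. }
    assert (E2 : exp (- ((z' - z) * a)) <= exp (- ((z' - z) * del))).
    { apply exp_le. assert ((z' - z) * del <= (z' - z) * a) by (apply Rmult_le_compat_l; lra). lra. }
    unfold r in *. assert (0 < eX mu z a) by apply exp_pos.
    assert (0 <= (eX mu z a - L) * (1 - exp (- ((z' - z) * del)))) by (apply Rmult_le_pos; lra).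
    assert (0 <= eX mu z a * (exp (- ((z' - z) * del)) - exp (- ((z' - z) * a)))) by (apply Rmult_le_pos; lra).
    nra. }
  assert (P1 : 0 <= RInt (fun a => k a * w a) 0 del).
  { apply RInt_ge_0. lra. apply Ikw; lra. intros x Hx. apply Rmult_le_pos. apply Hk0; lra. apply w0; lra. }
  assert (P2 : L * r * RInt k del A <= RInt (fun a => k a * w a) del A).
  { apply RInt_lb_mult. lra. apply Ik; lra. apply Ikw; lra. intros; apply Hk0; lra. intros; apply wlb; lra. }
  assert (Spl : RInt (fun a => k a * w a) 0 A = RInt (fun a => k a * w a) 0 del + RInt (fun a => k a * w a) del A).
  { symmetry. apply (RInt_Chasles (V:=R_CompleteNormedModule)). apply Ikw; lra. apply Ikw; lra. }
  assert (0 < L * r * RInt k del A).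
  { apply Rmult_lt_0_compat. apply Rmult_lt_0_compat; auto. unfold K in *. lra. }
  lra.
Qed.

Lemma ls_unique A n p k mu z z' : 0 < A -> pcg A n p k ->
  (forall s, 0 <= s <= A -> 0 <= k s) -> 0 < RInt k 0 A ->
  ex_RInt mu 0 A -> (forall s, 0 <= s <= A -> 0 <= mu s) ->
  RInt (fun a => k a * eX mu z a) 0 A = 1 -> RInt (fun a => k a * eX mu z' a) 0 A = 1 -> z = z'.
Proof.
  intros. destruct (Rtotal_order z z') as [H7 | [H7 | H7]]; auto.
  - pose proof (ls_strict A n p k mu z z' H H0 H1 H2 H3 H4 H7); lra.
  - pose proof (ls_strict A n p k mu z' z H H0 H1 H2 H3 H4 H7); lra.
Qed.

Lemma RInt_fac2 (F G : R -> R) a c : 0 <= a -> (forall s, 0 <= s <= a -> F s = c * G s) ->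
  ex_RInt G 0 a -> ex_RInt F 0 a /\ RInt F 0 a = c * RInt G 0 a.
Proof.
  intros Ha HF HG. split.
  - apply ex_RInt_ext with (fun s => scal c (G s)).
    intros x Hx. rewrite Rmin_left, Rmax_right in Hx by lra. rewrite HF by lra. reflexivity.
    apply (ex_RInt_scal (V:=R_NormedModule)); auto.
  - rewrite (RInt_ext F (fun s => scal c (G s))).
    apply (RInt_scal (V:=R_CompleteNormedModule)); auto.
    intros x Hx. rewrite Rmin_left, Rmax_right in Hx by lra. rewrite HF by lra. reflexivity.
Qed.

Lemma ex_RInt_addc (mu : R -> R) c d k : ex_RInt mu c d -> ex_RInt (fun s => mu s + k) c d.
Proof.
  intros H. apply (ex_RInt_plus (V:=R_NormedModule) mu (fun _ => k)); auto. apply ex_RInt_const.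
Qed.

Lemma xtilde_eX mu z A a : ex_RInt mu 0 A -> 0 <= a <= A -> xtilde mu z a = eX mu z a.
Proof.
  intros Hi Ha. unfold xtilde, eX. f_equal. f_equal. apply RInt_shift.
  apply (ex_RInt_sub mu 0 A); auto; lra. intros; ring.
Qed.

Lemma ls_conv A mu k z : 0 <= A -> ex_RInt mu 0 A -> lotka_sharpe A mu k z ->
  RInt (fun a => k a * eX mu z a) 0 A = 1.
Proof.
  intros HA Hi H. rewrite <- H. apply RInt_ext. intros x Hx.
  rewrite Rmin_left, Rmax_right in Hx by lra. unfold eX. f_equal. f_equal. f_equal.
  symmetry. apply RInt_shift. apply (ex_RInt_sub mu 0 A); auto; lra. intros; ring.
Qed.

Lemma pos_int A n p g h L : 0 < A -> pcg A n p g -> (forall s, 0 <= s <= A -> 0 <= g s) ->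
  0 < RInt g 0 A -> wcont 0 A h -> 0 < L -> (forall a, 0 <= a <= A -> L <= h a) ->
  0 < RInt (fun a => g a * h a) 0 A.
Proof.
  intros HA Hg Hg0 HG Hh HL Hlb.
  apply Rlt_le_trans with (L * RInt g 0 A). apply Rmult_lt_0_compat; auto.
  apply RInt_lb_mult. lra. apply (pcg_int1 A n p); auto; lra.
  apply (pcg_int A n p g h); auto; lra. intros; apply Hg0; lra. intros; apply Hlb; lra.
Qed.

Lemma adm_data A f : admissible_kernel A f -> exists n p, pcg A n p f /\ cont_pieces n p f /\
  (forall s, 0 <= s <= A -> 0 <= f s) /\ 0 < RInt f 0 A.
Proof.
  intros [Hpc [Hp Hi]]. destruct (pc_pcg A f Hpc) as [n [p [H1 H2]]]. exists n, p. auto.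
Qed.

Theorem proposition1
  (A : R) (mu1 mu2 k1 k2 g1 g2 : R -> R) (zeta1 zeta2 : R)
  (HA : 0 < A)
  (Hmu1 : admissible_kernel A mu1) (Hmu2 : admissible_kernel A mu2)
  (Hk1 : admissible_kernel A k1) (Hk2 : admissible_kernel A k2)
  (Hg1 : admissible_kernel A g1) (Hg2 : admissible_kernel A g2)
  (Hz1 : lotka_sharpe A mu1 k1 zeta1) (Hz2 : lotka_sharpe A mu2 k2 zeta2) :
  (* existence *)
  (forall ustar : R, 0 < ustar < Rmin zeta1 zeta2 ->
     let c1 := x1star0 A mu1 g2 zeta1 zeta2 ustar in
     let c2 := x2star0 A mu2 g1 zeta1 zeta2 ustar in
     let x1 := fun a => c1 * xtilde mu1 zeta1 a in
     let x2 := fun a => c2 * xtilde mu2 zeta2 a in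
     let lambda1 := RInt (fun a => g2 a * x1 a) 0 A in
     let lambda2 := RInt (fun a => g1 a * x2 a) 0 A in
     0 < c1 /\ 0 < c2 /\
     positive_on A x1 /\ positive_on A x2 /\
     steady_state A mu1 mu2 k1 k2 g1 g2 ustar x1 x2 /\
     0 < lambda1 /\ 0 < lambda2 /\
     ustar = zeta1 - lambda2 /\ ustar = zeta2 - / lambda1) /\
  (* uniqueness / necessity *)
  (forall (ustar : R) (x1 x2 : R -> R),
     0 < ustar ->
     positive_on A x1 -> positive_on A x2 ->
     steady_state A mu1 mu2 k1 k2 g1 g2 ustar x1 x2 ->
     0 < ustar < Rmin zeta1 zeta2 /\
     x1 0 = x1star0 A mu1 g2 zeta1 zeta2 ustar /\
     x2 0 = x2star0 A mu2 g1 zeta1 zeta2 ustar /\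
     (forall a, 0 <= a <= A ->
        x1 a = x1 0 * xtilde mu1 zeta1 a /\
        x2 a = x2 0 * xtilde mu2 zeta2 a)).
Proof.
  destruct (adm_data A mu1 Hmu1) as [nm1 [pm1 [Pm1 [Cm1 [Nm1 _]]]]].
  destruct (adm_data A mu2 Hmu2) as [nm2 [pm2 [Pm2 [Cm2 [Nm2 _]]]]].
  destruct (adm_data A k1 Hk1) as [nk1 [pk1 [Pk1 [_ [Nk1 Ik1]]]]].
  destruct (adm_data A k2 Hk2) as [nk2 [pk2 [Pk2 [_ [Nk2 Ik2]]]]].
  destruct (adm_data A g1 Hg1) as [ng1 [pg1 [Pg1 [_ [Ng1 Ig1]]]]].
  destruct (adm_data A g2 Hg2) as [ng2 [pg2 [Pg2 [_ [Ng2 Ig2]]]]].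
  assert (Im1 : ex_RInt mu1 0 A) by (apply (pcg_int1 A nm1 pm1); auto; lra).
  assert (Im2 : ex_RInt mu2 0 A) by (apply (pcg_int1 A nm2 pm2); auto; lra).
  pose proof (ls_conv A mu1 k1 zeta1 ltac:(lra) Im1 Hz1) as LS1.
  pose proof (ls_conv A mu2 k2 zeta2 ltac:(lra) Im2 Hz2) as LS2.
  assert (WX : forall mu z, ex_RInt mu 0 A -> wcont 0 A (eX mu z)) by (intros; apply eX_wcont; auto; lra).
  assert (WXt : forall mu z, ex_RInt mu 0 A -> wcont 0 A (xtilde mu z)).
  { intros mu z Hi. apply wcont_ext with (eX mu z). intros; symmetry; apply (xtilde_eX mu z A); auto. auto. }
  assert (PI : forall n p g mu z, pcg A n p g -> (forall s, 0 <= s <= A -> 0 <= g s) -> 0 < RInt g 0 A ->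
            ex_RInt mu 0 A -> (forall s, 0 <= s <= A -> 0 <= mu s) ->
            0 < RInt (fun a => g a * eX mu z a) 0 A).
  { intros n p g mu z Hg Hg0 HG Hi Hm. apply (pos_int A n p g _ (exp (- (RInt mu 0 A + Rabs z * A)))); auto.
    apply exp_pos. intros; apply eX_lb; auto. }
  assert (IE : forall n p g mu z, pcg A n p g -> ex_RInt mu 0 A -> ex_RInt (fun a => g a * eX mu z a) 0 A).
  { intros. apply (pcg_int A n p); auto; lra. }
  assert (RXt : forall g mu z, ex_RInt mu 0 A -> RInt (fun a => g a * xtilde mu z a) 0 A = RInt (fun a => g a * eX mu z a) 0 A).
  { intros. apply RInt_ext. intros x Hx. rewrite Rmin_left, Rmax_right in Hx by lra. rewrite xtilde_eX with (A:=A); auto; lra. }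
  split.
  -
    intros u Hu c1 c2 x1 x2 lambda1 lambda2.
    assert (Hu1 : u < zeta1) by (pose proof (Rmin_l zeta1 zeta2); lra).
    assert (Hu2 : u < zeta2) by (pose proof (Rmin_r zeta1 zeta2); lra).
    set (G21 := RInt (fun a => g2 a * xtilde mu1 zeta1 a) 0 A).
    set (G12 := RInt (fun a => g1 a * xtilde mu2 zeta2 a) 0 A).
    assert (HG21 : 0 < G21) by (unfold G21; rewrite RXt; auto; apply (PI ng2 pg2); auto).
    assert (HG12 : 0 < G12) by (unfold G12; rewrite RXt; auto; apply (PI ng1 pg1); auto).
    assert (Hc1 : 0 < c1).
    { unfold c1, x1star0. fold G21. apply Rinv_0_lt_compat. apply Rmult_lt_0_compat; lra. }
    assert (Hc2 : 0 < c2).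
    { unfold c2, x2star0. fold G12. apply Rdiv_lt_0_compat; lra. }
    assert (IXt : forall n p g mu z, pcg A n p g -> ex_RInt mu 0 A -> ex_RInt (fun a => g a * xtilde mu z a) 0 A).
    { intros. apply (pcg_int A n p); auto; lra. }
    assert (F1 : forall g n p, pcg A n p g -> ex_RInt (fun a => g a * x1 a) 0 A /\
               RInt (fun a => g a * x1 a) 0 A = c1 * RInt (fun a => g a * xtilde mu1 zeta1 a) 0 A).
    { intros g n p Hg. apply RInt_fac2. lra. intros s _. unfold x1. ring. apply (IXt n p); auto. }
    assert (F2 : forall g n p, pcg A n p g -> ex_RInt (fun a => g a * x2 a) 0 A /\
               RInt (fun a => g a * x2 a) 0 A = c2 * RInt (fun a => g a * xtilde mu2 zeta2 a) 0 A).
    { intros g n p Hg. apply RInt_fac2. lra. intros s _. unfold x2. ring. apply (IXt n p); auto. }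
    assert (L1 : @eq R lambda1 (/ (zeta2 - u))).
    { unfold lambda1. rewrite (proj2 (F1 g2 ng2 pg2 Pg2)). fold G21. unfold c1, x1star0. fold G21. field. lra. }
    assert (L2 : @eq R lambda2 (zeta1 - u)).
    { unfold lambda2. rewrite (proj2 (F2 g1 ng1 pg1 Pg1)). fold G12. unfold c2, x2star0. fold G12. field. lra. }
    assert (Xt0 : forall mu z, xtilde mu z 0 = 1).
    { intros. unfold xtilde. rewrite RInt_0, Ropp_0. apply exp_0. }
    pose proof (lin_exist A nm1 pm1 (fun s => zeta1 + mu1 s) HA (pcg_cplus A nm1 pm1 mu1 zeta1 Pm1)
                  (cp_cplus nm1 pm1 mu1 zeta1 Cm1)) as LE1.
    pose proof (lin_exist A nm2 pm2 (fun s => zeta2 + mu2 s) HA (pcg_cplus A nm2 pm2 mu2 zeta2 Pm2)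
                  (cp_cplus nm2 pm2 mu2 zeta2 Cm2)) as LE2.
    split; [auto|]. split; [auto|].
    split. { intros a Ha. unfold x1. apply Rmult_lt_0_compat; auto. apply exp_pos. }
    split. { intros a Ha. unfold x2. apply Rmult_lt_0_compat; auto. apply exp_pos. }
    split.
    { unfold steady_state. fold lambda1 lambda2. rewrite L1, L2.
      split. apply (F2 g1 ng1 pg1 Pg1).
      split. apply (F1 g2 ng2 pg2 Pg2).
      split. apply (F1 k1 nk1 pk1 Pk1).
      split. apply (F2 k2 nk2 pk2 Pk2).
      split.
      { intros a Ha. destruct (LE1 a Ha) as [I E].
        assert (R : ex_RInt (fun s => x1 s * (mu1 s + u + (zeta1 - u))) 0 a /\
                    RInt (fun s => x1 s * (mu1 s + u + (zeta1 - u))) 0 a =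
                    c1 * RInt (fun s => exp (- RInt (fun s0 => zeta1 + mu1 s0) 0 s) * (zeta1 + mu1 s)) 0 a).
        { apply RInt_fac2. lra. intros s _. unfold x1, xtilde. ring. auto. }
        split. apply R. rewrite (proj2 R). unfold x1. rewrite Xt0. unfold xtilde at 1. rewrite E. ring. }
      split.
      { intros a Ha. destruct (LE2 a Ha) as [I E].
        assert (R : ex_RInt (fun s => x2 s * (mu2 s + u + / / (zeta2 - u))) 0 a /\
                    RInt (fun s => x2 s * (mu2 s + u + / / (zeta2 - u))) 0 a =
                    c2 * RInt (fun s => exp (- RInt (fun s0 => zeta2 + mu2 s0) 0 s) * (zeta2 + mu2 s)) 0 a).
        { apply RInt_fac2. lra. intros s _. unfold x2, xtilde. rewrite Rinv_inv. ring. auto. }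
        split. apply R. rewrite (proj2 R). unfold x2. rewrite Xt0. unfold xtilde at 1. rewrite E. ring. }
      split.
      { rewrite (proj2 (F1 k1 nk1 pk1 Pk1)). rewrite RXt, LS1 by auto. unfold x1. rewrite Xt0. ring. }
      { rewrite (proj2 (F2 k2 nk2 pk2 Pk2)). rewrite RXt, LS2 by auto. unfold x2. rewrite Xt0. ring. } }
    rewrite L1, L2. split. apply Rinv_0_lt_compat; lra. split. lra. split. lra.
    rewrite Rinv_inv. ring.
  -
    intros u x1 x2 Hu P1 P2 SS.
    unfold steady_state in SS.
    destruct SS as [IG1 [IG2 [IK1 [IK2 [E1 [E2 [B1 B2]]]]]]].
    set (I1 := RInt (fun al => g1 al * x2 al) 0 A) in *.
    set (I2 := RInt (fun al => g2 al * x1 al) 0 A) in *.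
    assert (U1 : forall a, 0 <= a <= A -> x1 a = x1 0 * eX mu1 (u + I1) a).
    { intros a Ha.
      assert (Iq : forall c d, 0 <= c <= d -> d <= A -> ex_RInt (fun s => mu1 s + u + I1) c d).
      { intros c d Hc Hd. apply ex_RInt_addc. apply ex_RInt_addc. apply (ex_RInt_sub mu1 0 A); auto; lra. }
      assert (Cq : cont_pieces nm1 pm1 (fun s => mu1 s + u + I1)) by (apply cp_plus; apply cp_plus; auto).
      rewrite (lin_uniq A nm1 pm1 (fun s => mu1 s + u + I1) x1 HA (proj1 Pm1) Iq Cq E1 a Ha).
      unfold eX. f_equal. f_equal. f_equal. apply RInt_shift. apply (ex_RInt_sub mu1 0 A); auto; lra.
      intros; ring. }
    assert (U2 : forall a, 0 <= a <= A -> x2 a = x2 0 * eX mu2 (u + / I2) a).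
    { intros a Ha.
      assert (Iq : forall c d, 0 <= c <= d -> d <= A -> ex_RInt (fun s => mu2 s + u + / I2) c d).
      { intros c d Hc Hd. apply ex_RInt_addc. apply ex_RInt_addc. apply (ex_RInt_sub mu2 0 A); auto; lra. }
      assert (Cq : cont_pieces nm2 pm2 (fun s => mu2 s + u + / I2)) by (apply cp_plus; apply cp_plus; auto).
      rewrite (lin_uniq A nm2 pm2 (fun s => mu2 s + u + / I2) x2 HA (proj1 Pm2) Iq Cq E2 a Ha).
      unfold eX. f_equal. f_equal. f_equal. apply RInt_shift. apply (ex_RInt_sub mu2 0 A); auto; lra.
      intros; ring. }
    assert (x10 : 0 < x1 0) by (apply P1; lra).
    assert (x20 : 0 < x2 0) by (apply P2; lra).
    assert (Fac1 : forall n p g, pcg A n p g -> @eq R (RInt (fun a => g a * x1 a) 0 A) (x1 0 * RInt (fun a => g a * eX mu1 (u + I1) a) 0 A)).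
    { intros n p g Hg. apply RInt_fac2. lra. intros s Hs. rewrite U1 by auto. ring. apply (IE n p); auto. }
    assert (Fac2 : forall n p g, pcg A n p g -> @eq R (RInt (fun a => g a * x2 a) 0 A) (x2 0 * RInt (fun a => g a * eX mu2 (u + / I2) a) 0 A)).
    { intros n p g Hg. apply RInt_fac2. lra. intros s Hs. rewrite U2 by auto. ring. apply (IE n p); auto. }
    assert (Z1 : u + I1 = zeta1).
    { apply (ls_unique A nk1 pk1 k1 mu1); auto.
      rewrite (Fac1 nk1 pk1 k1 Pk1) in B1.
      apply (Rmult_eq_reg_l (x1 0)). lra. lra. }
    assert (Z2 : u + / I2 = zeta2).
    { apply (ls_unique A nk2 pk2 k2 mu2); auto.
      rewrite (Fac2 nk2 pk2 k2 Pk2) in B2.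
      apply (Rmult_eq_reg_l (x2 0)). lra. lra. }
    set (G1 := RInt (fun a => g1 a * eX mu2 (u + / I2) a) 0 A).
    set (G2 := RInt (fun a => g2 a * eX mu1 (u + I1) a) 0 A).
    assert (HG1 : 0 < G1) by (apply (PI ng1 pg1); auto).
    assert (HG2 : 0 < G2) by (apply (PI ng2 pg2); auto).
    assert (EI1 : I1 = x2 0 * G1) by (apply (Fac2 ng1 pg1 g1 Pg1)).
    assert (EI2 : I2 = x1 0 * G2) by (apply (Fac1 ng2 pg2 g2 Pg2)).
    assert (PI1 : 0 < I1) by (rewrite EI1; apply Rmult_lt_0_compat; auto).
    assert (PI2 : 0 < / I2) by (apply Rinv_0_lt_compat; rewrite EI2; apply Rmult_lt_0_compat; auto).
    split. split. auto. apply Rmin_glb_lt; lra.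
    split.
    { unfold x1star0. rewrite RXt by auto. rewrite <- Z1. fold G2. rewrite <- Z2.
      replace (u + / I2 - u) with (/ I2) by ring. rewrite EI2. field. lra. }
    split.
    { unfold x2star0. rewrite RXt by auto. rewrite <- Z2. fold G1. rewrite <- Z1.
      assert (Hr : @eq R (u + I1 - u) I1) by ring. rewrite Hr. rewrite EI1. field. lra. }
    intros a Ha. rewrite (xtilde_eX mu1 zeta1 A), (xtilde_eX mu2 zeta2 A) by auto.
    rewrite <- Z1, <- Z2. split; auto.
Qed.
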